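(* Let $w\in\mathfrak{S}_n$ be right-almost-reducible at $i$. Then (1) $\max\{w(1),\ldots,w(i-1)\}=i+1$; (2) $w(i)>i+1$; and (3) the elements of $\{1,\ldots,i+1\}\setminus\{w(1),\ldots,w(i-1)\}$ appear out of order in the one-line notation of $w$ (i.e. if this set is $\{a<b\}$ then $w^{-1}(b)<w^{-1}(a)$).
   Context: $\mathfrak{S}_n$ has simple generators $S=\{s_1,\ldots,s_{n-1}\}$, $s_i=(i\ i{+}1)$, products are compositions $(uv)(m)=u(v(m))$, and $w$ is written in one-line notation $w(1)\cdots w(n)$; $\ell$ is length. $\supp(x)$ is the set of simple generators in a reduced word of $x$; $D_L(x)=\{s:\ell(sx)<\ell(x)\}$, $D_R(x)=\{s:\ell(xs)<\ell(x)\}$. For $J\subseteq S$, $x=x^Jx_J$ is the parabolic decomposition ($x_J\in W_J=\langle J\rangle$, $x^J$ minimal length in $xW_J$); it is a BP-decomposition if $\supp(x^J)\cap J\subseteq D_L(x_J)$. $w$ is Bruhat irreducible if $\supp(w)=S$ and $w$ is not a product $w'w''$ with $w',w''\ne e$ and disjoint supports. A Bruhat irreducible $w$ is almost reducible at $(J,i)$ if $w=w^Jw_J$ is a BP-decomposition with $\supp(w^J)\cap J=\{s_i\}$ and $s_i\notin D_L(w)\cup D_R(w)$. $w$ is right-almost-reducible at $i$ if it is Bruhat irreducible and almost reducible at $(\{s_i,\ldots,s_{n-1}\},i)$. *)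

(* Defs.v *)
(* Symmetric group S_n realised as {perm 'I_n};
   one-line values and simple generators use 1-based indices as in the paper. *)
From mathcomp Require Import all_boot all_fingroup.
Set Implicit Arguments. Unset Strict Implicit. Unset Printing Implicit Defensive.

Section SymGroup.
Variable n : nat.
Local Notation P := {perm 'I_n}.

(* paper's product: (uv)(m) = u(v(m));  mathcomp's (v * u) x = u (v x) *)
Definition pmul (u v : P) : P := (v * u)%g.

(* simple generator s_i = (i i+1) in 1-based notation, i.e. the
   transposition of the 0-based points i-1 and i; meaningful for 0 < i < n *)
Definition sgen (i : nat) : P :=
  match (insub i.-1 : option 'I_n), (insub i : option 'I_n) with
  | Some a, Some b => tperm a b
  | _, _ => 1%g
  end.

Definition gen_ok (i : nat) : bool := (0 < i < n)%N.

Definition wprod (s : seq nat) : P := foldr (fun i acc => pmul (sgen i) acc) 1%g s.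

Definition word_of (w : P) (s : seq nat) : bool := all gen_ok s && (wprod s == w).

(* Coxeter length of a permutation = number of inversions *)
Definition ell (w : P) : nat :=
  #|[set p : 'I_n * 'I_n | (val p.1 < val p.2)%N && (val (w p.2) < val (w p.1))%N]|.

Definition reduced_word (w : P) (s : seq nat) : bool := word_of w s && (size s == ell w).

Definition supp (w : P) (i : nat) : Prop := exists s, reduced_word w s /\ i \in s.

Definition DL (w : P) (i : nat) : Prop := gen_ok i /\ (ell (pmul (sgen i) w) < ell w)%N.
Definition DR (w : P) (i : nat) : Prop := gen_ok i /\ (ell (pmul w (sgen i)) < ell w)%N.

Definition inWJ (J : nat -> Prop) (x : P) : Prop :=
  exists s, word_of x s /\ forall i, i \in s -> J i.

Definition parabolic (J : nat -> Prop) (x u v : P) : Prop :=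
  [/\ x = pmul u v, inWJ J v,
      (exists y, inWJ J y /\ u = pmul x y) &
      forall z, (exists y, inWJ J y /\ z = pmul x y) -> (ell u <= ell z)%N].

Definition BP_decomp (J : nat -> Prop) (x u v : P) : Prop :=
  parabolic J x u v /\ forall i, supp u i -> J i -> DL v i.

Definition bruhat_irreducible (w : P) : Prop :=
  (forall i, gen_ok i -> supp w i) /\
  ~ (exists w1 w2 : P, [/\ w1 <> 1%g, w2 <> 1%g,
        (forall i, ~ (supp w1 i /\ supp w2 i)) & w = pmul w1 w2]).

Definition almost_reducible (w : P) (J : nat -> Prop) (i : nat) : Prop :=
  bruhat_irreducible w /\
  exists u v, [/\ BP_decomp J w u v,
                  (forall k, (supp u k /\ J k) <-> k = i),
                  ~ DL w i & ~ DR w i].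

Definition right_almost_reducible (w : P) (i : nat) : Prop :=
  almost_reducible w (fun k => (i <= k < n)%N) i.

(* w acting on 0-based naturals (identity outside 'I_n) *)
Definition pw (w : P) (k : nat) : nat :=
  oapp (fun o : 'I_n => val (w o)) k (insub k : option 'I_n).

(* one-line notation, 1-based: oneline w m = w(m) *)
Definition oneline (w : P) (m : nat) : nat := (pw w m.-1).+1.
Definition oneline_inv (w : P) (a : nat) : nat := (pw (w^-1)%g a.-1).+1.

End SymGroup.

(* Main.v *)
Require Import Defs.
From mathcomp Require Import all_boot all_fingroup.
From mathcomp Require Import zify.
Set Implicit Arguments. Unset Strict Implicit. Unset Printing Implicit Defensive.

Section L.
Variable n : nat.
Local Notation P := {perm 'I_n}.

Definition invs (z : P) : {set 'I_n * 'I_n} :=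
  [set p : 'I_n * 'I_n | (nat_of_ord p.1 < nat_of_ord p.2) && (nat_of_ord (z p.2) < nat_of_ord (z p.1))].

Lemma ellE z : ell z = #|invs z|. Proof. by []. Qed.

Lemma pmulE (u v : P) p : pmul u v p = u (v p).
Proof. by rewrite /pmul permM. Qed.

Lemma pmulA (a b c : P) : pmul a (pmul b c) = pmul (pmul a b) c.
Proof. by rewrite /pmul mulgA. Qed.

Lemma pmulV (u v : P) : (pmul u v)^-1%g = pmul v^-1%g u^-1%g.
Proof. by rewrite /pmul invMg. Qed.

Lemma sgenE j : gen_ok n j -> exists pa pb : 'I_n,
  [/\ nat_of_ord pa = j.-1, nat_of_ord pb = j & sgen n j = tperm pa pb].
Proof.
rewrite /gen_ok => /andP [H0 H1].
have Ha : j.-1 < n by lia.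
exists (Ordinal Ha), (Ordinal H1); split => //.
rewrite /sgen.
case: insubP => [a _ Ea|]; last by rewrite Ha.
case: insubP => [b _ Eb|]; last by rewrite H1.
by congr tperm; apply: val_inj.
Qed.

Lemma sgen_fix j (p : 'I_n) : nat_of_ord p <> j.-1 -> nat_of_ord p <> j -> sgen n j p = p.
Proof.
move=> h1 h2; rewrite /sgen.
case: insubP => [a _ Ea|_]; last by rewrite perm1.
case: insubP => [b _ Eb|_]; last by rewrite perm1.
rewrite tpermD //; apply/eqP => E; subst p; simpl in *; lia.
Qed.

Lemma sgenK j : pmul (sgen n j) (sgen n j) = 1%g.
Proof.
rewrite /pmul /sgen.
case: insubP => [a _ Ea|_]; last by rewrite mulg1.
case: insubP => [b _ Eb|_]; last by rewrite mulg1.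
by rewrite tperm2.
Qed.

Lemma sgenV j : (sgen n j)^-1%g = sgen n j.
Proof.
rewrite /sgen.
case: insubP => [a _ Ea|_]; last by rewrite invg1.
case: insubP => [b _ Eb|_]; last by rewrite invg1.
by rewrite tpermV.
Qed.

Lemma wprod_cat s t : wprod n (s ++ t) = pmul (wprod n s) (wprod n t).
Proof.
elim: s => [|a s IH] /=; first by rewrite /pmul mulg1.
by rewrite IH pmulA.
Qed.

Lemma wprodE s p : wprod n s p = foldr (fun j q => sgen n j q) p s.
Proof. by elim: s => [|a s IH] /=; rewrite ?perm1 // pmulE IH. Qed.


Lemma step (z : P) j (pa pb : 'I_n) : nat_of_ord pa = j.-1 -> nat_of_ord pb = j -> 0 < j ->
  sgen n j = tperm pa pb -> nat_of_ord (z^-1%g pa) < nat_of_ord (z^-1%g pb) ->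
  invs (pmul (sgen n j) z) = (z^-1%g pa, z^-1%g pb) |: invs z /\
  (z^-1%g pa, z^-1%g pb) \notin invs z.
Proof.
move=> Ea Eb j0 Es Hlt.
have nab : pa != pb by apply/eqP => E; move: Ea Eb; rewrite E; lia.
split; last first.
  by rewrite inE /= !permKV Ea Eb; apply/negP => /andP [_]; lia.
apply/setP => [[p q]].
rewrite -[p](permK z) -[q](permK z); move: (z p) (z q) => c d.
rewrite !inE /= !pmulE !permKV Es xpair_eqE !(inj_eq (@perm_inj _ _)).
case: (tpermP pa pb c) => [Hc|Hc|/eqP Hc1 /eqP Hc2]; case: (tpermP pa pb d) => [Hd|Hd|/eqP Hd1 /eqP Hd2];
  subst; rewrite ?eqxx ?(negbTE nab) ?(eq_sym pb pa) ?(negbTE nab) /=.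
all: move: nab Hlt; rewrite -?val_eqE /= ?Ea ?Eb.
all: try (move: Hc1 Hc2; rewrite -!val_eqE /= ?Ea ?Eb).
all: try (move: Hd1 Hd2; rewrite -!val_eqE /= ?Ea ?Eb).
all: rewrite /= -?/(nat_of_ord _).
all: move: (nat_of_ord (z^-1%g pa)) (nat_of_ord (z^-1%g pb)) => A B.
all: move: j0; rewrite /= -?/(nat_of_ord _) => j0.
all: move=> *; apply/idP/idP; lia.
Qed.

Lemma sgen_tp j (pa pb : 'I_n) : gen_ok n j -> nat_of_ord pa = j.-1 -> nat_of_ord pb = j ->
  sgen n j = tperm pa pb.
Proof.
move=> Hj Ea Eb; have [a [b [Ea' Eb' ->]]] := sgenE Hj.
by congr tperm; apply: val_inj; rewrite /= ?Ea ?Eb ?Ea' ?Eb'.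
Qed.

Lemma ell_inv (z : P) : ell z^-1%g = ell z.
Proof.
have H : forall y : P, ell y <= ell y^-1%g.
  move=> y; rewrite !ellE.
  have inj : injective (fun p : 'I_n * 'I_n => (y p.2, y p.1)).
    by move=> [a b] [c d] /= [/perm_inj -> /perm_inj ->].
  rewrite -(card_imset _ inj); apply: subset_leq_card.
  apply/subsetP => x /imsetP [[a b] Hab ->]; move: Hab.
  by rewrite !inE /= !permK => /andP [-> ->].
by apply/eqP; rewrite eqn_leq H -{2}(invgK z) H.
Qed.

Lemma left_up (z : P) j (pa pb : 'I_n) : gen_ok n j -> nat_of_ord pa = j.-1 -> nat_of_ord pb = j ->
  nat_of_ord (z^-1%g pa) < nat_of_ord (z^-1%g pb) ->
  ell (pmul (sgen n j) z) = (ell z).+1 /\ invs z \subset invs (pmul (sgen n j) z).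
Proof.
move=> Hj Ea Eb Hlt.
have j0 : 0 < j by move: Hj; rewrite /gen_ok => /andP [].
have [E N] := step Ea Eb j0 (sgen_tp Hj Ea Eb) Hlt.
by rewrite !ellE E cardsU1 N; split => //; apply: subsetUr.
Qed.

Lemma left_down (z : P) j (pa pb : 'I_n) : gen_ok n j -> nat_of_ord pa = j.-1 -> nat_of_ord pb = j ->
  nat_of_ord (z^-1%g pb) < nat_of_ord (z^-1%g pa) -> (ell (pmul (sgen n j) z)).+1 = ell z.
Proof.
move=> Hj Ea Eb Hlt.
set y := pmul (sgen n j) z.
have Ez : z = pmul (sgen n j) y by rewrite /y pmulA sgenK /pmul mulg1.
have Hs := sgen_tp Hj Ea Eb.
have : nat_of_ord (y^-1%g pa) < nat_of_ord (y^-1%g pb).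
  rewrite /y pmulV sgenV !pmulE Hs tpermL tpermR; done.
move=> /(left_up Hj Ea Eb) [E _].
have -> : ell z = ell (pmul (sgen n j) y) by rewrite -Ez.
by rewrite E.
Qed.

Lemma left_le (z : P) j : gen_ok n j -> ell (pmul (sgen n j) z) <= (ell z).+1.
Proof.
move=> Hj; have [pa [pb [Ea Eb Hs]]] := sgenE Hj.
have nab : z^-1%g pa != z^-1%g pb.
  by rewrite (inj_eq (@perm_inj _ _)); apply/eqP => E; move: Ea Eb; rewrite E; move: Hj; rewrite /gen_ok; lia.
case: (ltngtP (z^-1%g pa) (z^-1%g pb)) => H.
- by have [-> _] := left_up Hj Ea Eb H.
- by rewrite -(left_down Hj Ea Eb H); lia.
- by move: nab; rewrite -val_eqE /= H eqxx.
Qed.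

Lemma right_up (z : P) j (pa pb : 'I_n) : gen_ok n j -> nat_of_ord pa = j.-1 -> nat_of_ord pb = j ->
  nat_of_ord (z pa) < nat_of_ord (z pb) -> ell (pmul z (sgen n j)) = (ell z).+1.
Proof.
move=> Hj Ea Eb H.
rewrite -ell_inv pmulV sgenV -(ell_inv z).
have H' : nat_of_ord ((z^-1%g)^-1%g pa) < nat_of_ord ((z^-1%g)^-1%g pb) by rewrite invgK.
by have [-> _] := left_up Hj Ea Eb H'.
Qed.

Lemma right_down (z : P) j (pa pb : 'I_n) : gen_ok n j -> nat_of_ord pa = j.-1 -> nat_of_ord pb = j ->
  nat_of_ord (z pb) < nat_of_ord (z pa) -> (ell (pmul z (sgen n j))).+1 = ell z.
Proof.
move=> Hj Ea Eb H.
rewrite -ell_inv pmulV sgenV -(ell_inv z).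
by apply: (left_down Hj Ea Eb); rewrite invgK.
Qed.

Lemma right_le (z : P) j : gen_ok n j -> ell (pmul z (sgen n j)) <= (ell z).+1.
Proof.
move=> Hj; rewrite -ell_inv pmulV sgenV -(ell_inv z); exact: left_le.
Qed.


Lemma ell1 : ell (1%g : P) = 0.
Proof. by rewrite ellE; apply/eqP; rewrite cards_eq0; apply/eqP/setP => p; rewrite !inE !perm1; apply/negP => /andP [] /ltn_trans H /H; rewrite ltnn. Qed.

Lemma pmul1l (y : P) : pmul 1%g y = y.
Proof. by rewrite /pmul mulg1. Qed.

Lemma pmul1r (y : P) : pmul y 1%g = y.
Proof. by rewrite /pmul mul1g. Qed.

Lemma word_le Q (y : P) : all (gen_ok n) Q -> ell (pmul y (wprod n Q)) <= ell y + size Q.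
Proof.
elim: Q y => [|q Q IH] y /=; first by rewrite pmul1r addn0.
move=> /andP [Hq HQ]; rewrite pmulA.
apply: leq_trans (IH _ HQ) _; rewrite addnS -addSn leq_add2r; exact: right_le.
Qed.

Lemma mono Q (y : P) : all (gen_ok n) Q -> ell (pmul y (wprod n Q)) = ell y + size Q ->
  invs y^-1%g \subset invs (pmul y (wprod n Q))^-1%g.
Proof.
elim: Q y => [|q Q IH] y /=; first by rewrite pmul1r.
move=> /andP [Hq HQ]; rewrite pmulA => E.
have L1 := word_le (pmul y (sgen n q)) HQ.
have L2 := right_le y Hq.
have E1 : ell (pmul y (sgen n q)) = (ell y).+1 by lia.
have E2 : ell (pmul (pmul y (sgen n q)) (wprod n Q)) = ell (pmul y (sgen n q)) + size Q by lia.
have S := IH _ HQ E2.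
apply: subset_trans S.
have [pa [pb [Ea Eb Hs]]] := sgenE Hq.
have nab : y pa != y pb.
  rewrite (inj_eq (@perm_inj _ _)); apply/eqP => E'; move: Ea Eb; rewrite E'; move: Hq; rewrite /gen_ok; lia.
case: (ltngtP (y pa) (y pb)) => H.
- have H' : nat_of_ord ((y^-1%g)^-1%g pa) < nat_of_ord ((y^-1%g)^-1%g pb) by rewrite invgK.
  have [_ S] := left_up Hq Ea Eb H'.
  by rewrite pmulV sgenV.
- have := right_down Hq Ea Eb H; lia.
- by move: nab; rewrite -val_eqE /= H eqxx.
Qed.

Definition pres k (x : P) := forall p : 'I_n, (nat_of_ord (x p) < k) = (nat_of_ord p < k).

Lemma sgen_pres j k : gen_ok n j -> j != k -> pres k (sgen n j).
Proof.
move=> Hj Hjk p; have [pa [pb [Ea Eb ->]]] := sgenE Hj.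
case: tpermP => [->|->|_ _] //; rewrite ?Ea ?Eb; move: Hj Hjk; rewrite /gen_ok; lia.
Qed.

Lemma wprod_pres k s : all (fun j => gen_ok n j && (j != k)) s -> pres k (wprod n s).
Proof.
elim: s => [|j s IH]; first by move=> _ p; rewrite wprodE.
rewrite /=.
move=> /andP [/andP [Hj Hjk] Hs] p; rewrite pmulE sgen_pres //; exact: IH.
Qed.

Lemma split_first (k : nat) s : k \in s -> exists s1 s2, s = s1 ++ k :: s2 /\ k \notin s1.
Proof.
elim: s => [|a s IH] //=; rewrite inE; case: eqP => [-> _|Ne /= /IH [s1 [s2 [E N]]]].
- by exists [::], s.
- exists (a :: s1), s2; rewrite E; split => //; rewrite inE negb_or N andbT; apply/eqP => E'; exact: Ne.
Qed.

Lemma noreduce (x : P) s k : reduced_word x s -> k \in s -> pres k x -> False.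
Proof.
move=> /andP [/andP [Hall /eqP Ex] /eqP Hsz] Hk Px.
have [s1 [s2 [Es Nk]]] := split_first Hk.
move: Hall Ex Hsz; rewrite Es all_cat /= => /and3P [H1 Hkok H2].
rewrite wprod_cat /= pmulA => Ex.
set P0 := wprod n s1; set y := pmul P0 (sgen n k) => Hsz.
have L0 := word_le 1%g H1; rewrite pmul1l ell1 add0n in L0.
have L1 := right_le P0 Hkok.
have L2 := word_le y H2.
rewrite Ex size_cat /= in L2 Hsz.
rewrite -/P0 in L0; rewrite -/y in L1.
have Ey : ell y = (ell P0).+1 by lia.
have [pa [pb [Ea Eb Hs]]] := sgenE Hkok.
have k0 : 0 < k by move: Hkok; rewrite /gen_ok => /andP [].
have HP : nat_of_ord (P0 pa) < nat_of_ord (P0 pb).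
  have nab : P0 pa != P0 pb.
    rewrite (inj_eq (@perm_inj _ _)); apply/eqP => E'; move: Ea Eb; rewrite E'; lia.
  case: (ltngtP (P0 pa) (P0 pb)) => H //.
  - have := right_down Hkok Ea Eb H; rewrite -/y; lia.
  - by move: nab; rewrite -val_eqE /= H eqxx.
have HP' : nat_of_ord ((P0^-1%g)^-1%g pa) < nat_of_ord ((P0^-1%g)^-1%g pb) by rewrite invgK.
have [E _] := step Ea Eb k0 Hs HP'.
have Hin : (P0 pa, P0 pb) \in invs y^-1%g.
  by rewrite /y pmulV sgenV E invgK setU11.
have Ex' : pmul y (wprod n s2) = x by exact: Ex.
have E3 : ell (pmul y (wprod n s2)) = ell y + size s2 by rewrite Ex'; lia.
have S := mono H2 E3.
move: (subsetP S _ Hin); rewrite Ex' inE /= => /andP [_].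
have PP : pres k P0.
  apply: wprod_pres; apply/allP => j Hj; rewrite (allP H1 j Hj) /=.
  by apply/eqP => E'; move: Nk; rewrite -E' Hj.
have Pxi : pres k x^-1%g by move=> q; have := Px (x^-1%g q); rewrite permKV => ->.
have A1 : nat_of_ord (P0 pa) < k by rewrite PP Ea; lia.
have A2 : ~~ (nat_of_ord (P0 pb) < k) by rewrite PP Eb ltnn.
have B1 : x^-1%g (P0 pa) < k by rewrite Pxi.
have B2 : ~~ (x^-1%g (P0 pb) < k) by rewrite Pxi.
lia.
Qed.


Lemma incr_id (y : P) : (forall p q : 'I_n, nat_of_ord q = (nat_of_ord p).+1 -> nat_of_ord (y p) < nat_of_ord (y q)) -> y = 1%g.
Proof.
move=> Hy.
have G1 : forall m (p : 'I_n), nat_of_ord p = m -> m <= y p.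
  elim => [//|m IH] p Ep.
  have Hm : m < n by have := ltn_ord p; lia.
  have := IH (Ordinal Hm) erefl; have := Hy (Ordinal Hm) p; rewrite /= Ep => /(_ erefl); lia.
have G2 : forall m (p : 'I_n), nat_of_ord p + m = n.-1 -> y p <= p.
  elim => [|m IH] p Ep.
    have := ltn_ord (y p); rewrite addn0 in Ep; lia.
  have Hm : (nat_of_ord p).+1 < n by have := ltn_ord p; lia.
  have Em : (nat_of_ord p).+1 + m = n.-1 by lia.
  have := IH (Ordinal Hm) Em.
  have := Hy p (Ordinal Hm) erefl; rewrite /=; lia.
apply/permP => p; apply: val_inj; rewrite perm1 /=.
apply/eqP; rewrite eqn_leq (G1 _ p erefl) andbT.
have Hp : nat_of_ord p <= n.-1 by have := ltn_ord p; lia.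
by apply: (G2 (n.-1 - nat_of_ord p)); lia.
Qed.

Lemma desc_or_id (x : P) : x = 1%g \/ exists j (pa pb : 'I_n),
  [/\ gen_ok n j, nat_of_ord pa = j.-1, nat_of_ord pb = j & x^-1%g pb < x^-1%g pa].
Proof.
case: (pickP (fun pr : 'I_n * 'I_n => (nat_of_ord pr.2 == (nat_of_ord pr.1).+1) && (x^-1%g pr.2 < x^-1%g pr.1))) => [[pa pb] /andP [/eqP Eab Hd] | Hno].
  right; exists (nat_of_ord pb), pa, pb; split => //=; last by rewrite Eab.
  have := ltn_ord pb; rewrite /gen_ok Eab; lia.
left.
have : x^-1%g = 1%g.
  apply: incr_id => p q Eq.
  have := Hno (p, q); rewrite /= Eq eqxx /= => /negbT.
  have : x^-1%g p != x^-1%g q.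
    rewrite (inj_eq (@perm_inj _ _)); apply/eqP => E; move: Eq; rewrite E; lia.
  rewrite -val_eqE /=; lia.
by move=> E; rewrite -(invgK x) E invg1.
Qed.

Lemma ex_red (x : P) : exists s, reduced_word x s.
Proof.
move: (leqnn (ell x)); move: {2}(ell x) => m; elim: m x => [|m IH] x Hx.
  case: (desc_or_id x) => [->|[j [pa [pb [Hj Ea Eb Hd]]]]].
    by exists [::]; rewrite /reduced_word /word_of ell1 /= !eqxx.
  have := left_down Hj Ea Eb Hd; lia.
case: (desc_or_id x) => [->|[j [pa [pb [Hj Ea Eb Hd]]]]].
  by exists [::]; rewrite /reduced_word /word_of ell1 /= !eqxx.
have E := left_down Hj Ea Eb Hd.
have Hm : ell (pmul (sgen n j) x) <= m by lia.
have [s' /andP [/andP [Ha /eqP Ew] /eqP Es]] := IH (pmul (sgen n j) x) Hm.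
exists (j :: s'); rewrite /reduced_word /word_of /= Hj Ha Ew pmulA sgenK pmul1l eqxx /=.
by rewrite Es E.
Qed.


Lemma pwE (x : P) (p : 'I_n) : pw x p = x p.
Proof. by rewrite /pw valK. Qed.

Lemma wprod_fix s (p : 'I_n) : (forall j, j \in s -> sgen n j p = p) -> wprod n s p = p.
Proof.
rewrite wprodE; elim: s => [//|j s IH] H /=.
have H' : forall k, k \in s -> sgen n k p = p by move=> k Hk; apply: H; rewrite inE Hk orbT.
by rewrite IH // H // mem_head.
Qed.

Lemma fix_ge_pres k (x : P) : (forall p : 'I_n, k <= p -> x p = p) -> pres k x.
Proof.
move=> H p; case: (leqP k p) => Hp.
  by rewrite H // ltnNge Hp.
apply/negP => Hx'; have Hx : k <= x p by lia.
have := H _ Hx; move/perm_inj => E; move: Hx; rewrite E; lia.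
Qed.

Lemma fix_lt_pres k (x : P) : (forall p : 'I_n, p < k -> x p = p) -> pres k x.
Proof.
move=> H p; case: (ltnP p k) => Hp.
  by rewrite H.
apply/negP => Hx.
have := H _ Hx; move/perm_inj => E; move: Hx; rewrite E; lia.
Qed.

End L.

Unset Implicit Arguments.

Theorem proposition5p4 (n : nat) (w : {perm 'I_n}) (i : nat)
  (H : right_almost_reducible w i) :
  [/\ (\max_(1 <= m < i) oneline w m)%N = i.+1,
      (i.+1 < oneline w i)%N &
      forall a b : nat, (1 <= a)%N -> (a < b)%N -> (b <= i.+1)%N ->
        a \notin [seq oneline w m | m <- index_iota 1 i] ->
        b \notin [seq oneline w m | m <- index_iota 1 i] ->
        (oneline_inv w b < oneline_inv w a)%N].
Proof.
move: H => [[_ Nred] [u [v [[[Ew [sv [/andP [Hsv /eqP Evw] HsvJ]] [y [[sy [/andP [Hsy /eqP Eyw] HsyJ]] Euy]] Hmin] HBP] Hsupp NDL NDR]]]].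
have [Hsu _] := (Hsupp i).2 erefl.
have Hi : gen_ok n i.
  by case: Hsu => s [/andP [/andP [Hs _] _] Hin]; apply: (allP Hs).
have Hi' := Hi; move: Hi' => /andP [i0 iN].
have HaN : i.-1 < n by lia.
set pa : 'I_n := Ordinal HaN; set pb : 'I_n := Ordinal iN.
have Ea : nat_of_ord pa = i.-1 by [].
have Eb : nat_of_ord pb = i by [].
have Hs := sgen_tp Hi Ea Eb.
have HDLv : DL v i by apply: HBP => //; rewrite leqnn iN.
have U1 : forall p : 'I_n, i < p -> u p = p.
  have [s Rs] := ex_red u.
  have := Rs; move=> /andP [/andP [Hall /eqP Es] _]; rewrite -Es => p Hp.
  have Hle : forall j, j \in s -> j <= i.
    move=> j Hj; rewrite leqNgt; apply/negP => Hji.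
    have Hj' : gen_ok n j := allP Hall j Hj.
    have Jj : i <= j < n by move: Hj'; rewrite /gen_ok; lia.
    have := (Hsupp j).1 (conj (ex_intro _ s (conj Rs Hj)) Jj); lia.
  apply: wprod_fix => j Hj; apply: sgen_fix; have := Hle j Hj; lia.
have V1 : forall p : 'I_n, p < i.-1 -> v p = p.
  move=> p Hp; rewrite -Evw; apply: wprod_fix => j Hj; apply: sgen_fix;
  have := HsvJ j Hj; lia.
have U2 : u pb != pb.
  apply/eqP => E; case: Hsu => s [Rs Ks]; apply: (noreduce Rs Ks).
  apply: fix_ge_pres => p Hp; case: (ltnP i p) => Hp'; first exact: U1.
  have -> : p = pb by apply: val_inj => /=; lia.
  exact: E.
have Ule : forall p : 'I_n, p <= i -> u p <= i.
  move=> p Hp; rewrite leqNgt; apply/negP => Hup.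
  have := U1 _ Hup; move/perm_inj => E; move: Hup; rewrite E; lia.
have Wlt : forall p : 'I_n, p < i.-1 -> w p = u p.
  by move=> p Hp; rewrite Ew pmulE V1.
have Umin : u pa < u pb.
  have nab : u pa != u pb.
    rewrite (inj_eq (@perm_inj _ _)); apply/eqP => E; move: Ea Eb; rewrite E; lia.
  case: (ltngtP (u pa) (u pb)) => Hc //.
  - exfalso; have := right_down Hi Ea Eb Hc.
    have Hz : exists y0, inWJ (fun k => i <= k < n) y0 /\ pmul u (sgen n i) = pmul w y0.
      exists (pmul y (sgen n i)); split; last by rewrite Euy pmulA.
      exists (sy ++ [:: i]); split.
        rewrite /word_of all_cat Hsy /= Hi wprod_cat Eyw /= pmul1r eqxx //.
      move=> k; rewrite mem_cat => /orP [/HsyJ //|]; rewrite inE => /eqP ->; lia.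
    have := Hmin _ Hz; lia.
  - by move: nab; rewrite -val_eqE /= Hc eqxx.
have UBlt : u pb < i.
  have L := Ule pb (leqnn _).
  have N : nat_of_ord (u pb) != i.
    apply: contra U2 => /eqP E; apply/eqP/val_inj; rewrite /= E //.
  lia.
have m0lt : u^-1%g pb < i.-1.
  have H1 : u^-1%g pb <= i.
    rewrite leqNgt; apply/negP => H1; have := U1 _ H1; rewrite permKV => E.
    by move: H1; rewrite -E /=; lia.
  have H2 : u^-1%g pb != pa.
    apply/negP => /eqP E; move: Umin UBlt; rewrite -E permKV /=; lia.
  have H3 : u^-1%g pb != pb.
    apply: contra U2 => /eqP E; rewrite -{1}E permKV //.
  move: H2 H3; rewrite -!val_eqE /=; lia.
have Wi : forall q : 'I_n, w^-1%g q = v^-1%g (u^-1%g q).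
  by move=> q; rewrite Ew pmulV pmulE.
have Vd : v^-1%g pb < v^-1%g pa.
  case: HDLv => _ Hlt.
  have nab : v^-1%g pa != v^-1%g pb.
    rewrite (inj_eq (@perm_inj _ _)); apply/eqP => E; move: Ea Eb; rewrite E; lia.
  case: (ltngtP (v^-1%g pa) (v^-1%g pb)) => Hc //.
  - by have [E _] := left_up Hi Ea Eb Hc; move: Hlt; rewrite E ltnNge leqnSn.
  - by move: nab; rewrite -val_eqE /= Hc eqxx.
have ol : forall p : 'I_n, p < i.-1 -> oneline w p.+1 = (u p).+1.
  by move=> p Hp; rewrite /oneline /= pwE Wlt.
have oli : forall q : 'I_n, oneline_inv w q.+1 = (w^-1%g q).+1.
  by move=> q; rewrite /oneline_inv /= pwE.
split.
- apply/eqP; rewrite eqn_leq; apply/andP; split.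
  + apply/bigmax_leqP_seq => m; rewrite mem_index_iota => Hm _.
    have Hm' : m.-1 < n by lia.
    have -> : m = (nat_of_ord (Ordinal Hm')).+1 by rewrite /=; lia.
    rewrite ol /=; last by lia.
    have : m.-1 <= i by lia.
    move/(Ule (Ordinal Hm')); lia.
  + have := @leq_bigmax_seq _ (index_iota 1 i) xpredT (oneline w) (u^-1%g pb).+1.
    rewrite mem_index_iota ol // permKV /=.
    move=> /(_ (ltac:(lia)) erefl); done.
- rewrite /oneline -Ea pwE Ew pmulE.
  have [h|h|h] := ltngtP (v pa) i.
  + exfalso; case: (ltnP (v pa) i.-1) => h'.
      have := V1 _ h'; move/perm_inj => E; move: h'; rewrite E /=; lia.
    have Evp : v pa = pa by apply: val_inj => /=; lia.
    have Evi : v^-1%g pa = pa by rewrite -{1}Evp permK.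
    move: Vd; rewrite Evi => Vd.
    have := V1 _ Vd; rewrite permKV => E.
    by move: Vd; rewrite -E /=; lia.
  + by rewrite U1 //.
  + exfalso; apply: Nred.
    have Evp : v pa = pb by apply: val_inj => /=; lia.
    exists (pmul u (sgen n i)), (pmul (sgen n i) v); split.
    * move=> E1; have := congr1 (fun x : {perm 'I_n} => x pb) E1.
      rewrite pmulE perm1 Hs tpermR => E2.
      by move: Umin UBlt; rewrite E2 /=; lia.
    * move=> E2.
      have Ev : v = sgen n i by rewrite -[v]pmul1l -(sgenK n i) -pmulA E2 pmul1r.
      apply: NDR; split => //.
      have Hc : w pb < w pa by rewrite Ew !pmulE Ev Hs tpermL tpermR.
      have := right_down Hi Ea Eb Hc; lia.
    * move=> k [[s1 [R1 K1]] [s2 [R2 K2]]]; case: (ltnP i k) => hk.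
        apply: (noreduce R1 K1); apply: fix_ge_pres => p hp.
        rewrite pmulE sgen_fix; [apply: U1; lia | lia | lia].
      apply: (noreduce R2 K2); apply: fix_lt_pres => p hp; rewrite pmulE.
      case: (ltnP p i.-1) => hp'.
        rewrite V1 // sgen_fix //; lia.
      have -> : p = pa by apply: val_inj => /=; lia.
      by rewrite Evp Hs tpermR.
    * by rewrite pmulA -(pmulA u) sgenK pmul1r.
- move=> a b a1 ab bi Na Nb.
  have Q : forall c : 'I_n, c <= i ->
      (nat_of_ord c).+1 \notin [seq oneline w m | m <- index_iota 1 i] ->
      u^-1%g c = pa \/ u^-1%g c = pb.
    move=> c hc Nc.
    have hq : u^-1%g c <= i.
      rewrite leqNgt; apply/negP => H1; have := U1 _ H1; rewrite permKV => E.
      by move: H1; rewrite -E /=; lia.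
    case: (ltnP (u^-1%g c) i.-1) => hq'.
      exfalso; move/negP: Nc; apply.
      rewrite -{1}(permKV u c) -ol //; apply: map_f; rewrite mem_index_iota; lia.
    case: (ltnP (u^-1%g c) i) => hq''.
      by left; apply: val_inj => /=; lia.
    by right; apply: val_inj => /=; lia.
  have HaN' : a.-1 < n by lia.
  have HbN' : b.-1 < n by lia.
  set ca : 'I_n := Ordinal HaN'; set cb : 'I_n := Ordinal HbN'.
  have Eca : a = (nat_of_ord ca).+1 by rewrite /=; lia.
  have Ecb : b = (nat_of_ord cb).+1 by rewrite /=; lia.
  rewrite Eca in Na; rewrite Ecb in Nb.
  have Qa := Q ca (ltac:(rewrite /=; lia)) Na.
  have Qb := Q cb (ltac:(rewrite /=; lia)) Nb.
  rewrite Eca Ecb !oli !Wi.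
  have Ua : forall c : 'I_n, u^-1%g c = pa -> c = u pa by move=> c <-; rewrite permKV.
  have Ub : forall c : 'I_n, u^-1%g c = pb -> c = u pb by move=> c <-; rewrite permKV.
  case: Qa => Ha; case: Qb => Hb.
  + have : ca = cb by apply: (@perm_inj _ (u^-1)%g); rewrite Ha Hb.
    move/(congr1 (@nat_of_ord n)) => E; move: ab; rewrite Eca Ecb E; lia.
  + by rewrite Ha Hb.
  + have E1 := Ub _ Ha; have E2 := Ua _ Hb.
    have : nat_of_ord ca = u pb by rewrite E1.
    have : nat_of_ord cb = u pa by rewrite E2.
    move: Umin ab; rewrite Eca Ecb; lia.
  + have : ca = cb by apply: (@perm_inj _ (u^-1)%g); rewrite Ha Hb.
    move/(congr1 (@nat_of_ord n)) => E; move: ab; rewrite Eca Ecb E; lia.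
Qed.
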